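(* Let $s_1,\dots,s_n\in\{0,1\}^{<\mathbb N}$ with $s_i\notin\{1^m:m\ge0\}$ for each $i$, and let $t_1,\dots,t_n\in\mathbb Z$ with $\sum_{i=1}^n t_i=0$. Then $y_{s_1}^{t_1}\cdots y_{s_n}^{t_n}\in S$.
   Context: Let $\{0,1\}^{\mathbb N}$ be the Cantor set of infinite binary sequences and $\{0,1\}^{<\mathbb N}$ the set of finite binary words, including the empty word (note $1^0$ is the empty word); juxtaposition denotes concatenation, $0^n,1^n$ denote constant words. Homeomorphisms act on the right. Define $x,y$ by $00\eta\cdot x=0\eta$, $01\eta\cdot x=10\eta$, $1\eta\cdot x=11\eta$, and recursively $00\eta\cdot y=0(\eta\cdot y)$, $01\eta\cdot y=10(\eta\cdot y^{-1})$, $1\eta\cdot y=11(\eta\cdot y)$; $x_s$ (resp. $y_s$) sends $s\eta\mapsto s(\eta\cdot x)$ (resp. $s(\eta\cdot y)$) and fixes sequences not beginning with $s$. For $n\ge0$, $p_n$ is the homeomorphism with $1^k0\eta\cdot p_n=1^{k+1}0\eta$ for $0\le k\le n-1$, $1^n0\eta\cdot p_n=1^{n+1}\eta$, and $1^{n+1}\eta\cdot p_n=0\eta$. $T$ is the group generated by all $x_s$ and all $p_n$, and $S=\langle T,\ y_{10}y_{110}^{-1}\rangle$. *)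

(* Defs.v *)
(* Cantor set {0,1}^N modelled as streams nat -> bool
   (false = 0, true = 1); finite words are seq bool. Homeomorphisms act on
   the RIGHT: a product g1 g2 ... gn acts as eta |-> (...((eta.g1).g2)...).gn,
   i.e. as the function gn \o ... \o g1. *)
From mathcomp Require Import all_boot all_order all_algebra.
Set Implicit Arguments. Unset Strict Implicit. Unset Printing Implicit Defensive.

Definition stream := nat -> bool.

Definition shift (k : nat) (e : stream) : stream := fun n => e (k + n).
Definition prepend (w : seq bool) (e : stream) : stream :=
  fun n => if n < size w then nth false w n else e (n - size w).
Definition begins (w : seq bool) (e : stream) : bool :=
  all (fun i => e i == nth false w i) (iota 0 (size w)).

Definition xfun (e : stream) : stream :=
  if e 0 then prepend [:: true] e
  else if e 1 then prepend [:: true; false] (shift 2 e)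
  else shift 1 e.

(* y (inv = false) and y^{-1} (inv = true), computed bit by bit.
   y :      00eta -> 0(eta.y),    01eta -> 10(eta.y^-1),  1eta  -> 11(eta.y)
   y^-1 :    0eta -> 00(eta.y^-1), 10eta -> 01(eta.y),    11eta -> 1(eta.y^-1)
   (the second line is the inverse of the first, forced by the recursion).
   [ybit fuel inv e n] is the n-th output bit; fuel n.+1 always suffices since
   each step emits at least one output letter. *)
Fixpoint ybit (fuel : nat) (inv : bool) (e : stream) (n : nat) : bool :=
  match fuel with
  | O => false
  | S f =>
    if ~~ inv then
      if e 0 then
        match n with 0 | 1 => true | S (S m) => ybit f false (shift 1 e) m end
      else if e 1 then
        match n with 0 => true | 1 => false | S (S m) => ybit f true (shift 2 e) m end
      else
        match n with 0 => false | S m => ybit f false (shift 2 e) m end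
    else
      if ~~ e 0 then
        match n with 0 | 1 => false | S (S m) => ybit f true (shift 1 e) m end
      else if ~~ e 1 then
        match n with 0 => false | 1 => true | S (S m) => ybit f false (shift 2 e) m end
      else
        match n with 0 => true | S m => ybit f true (shift 2 e) m end
  end.

Definition yfun (inv : bool) (e : stream) : stream := fun n => ybit n.+1 inv e n.

Definition restr (s : seq bool) (g : stream -> stream) (e : stream) : stream :=
  if begins s e then prepend s (g (shift (size s) e)) else e.

Definition x_ (s : seq bool) := restr s xfun.
Definition y_ (s : seq bool) := restr s (yfun false).
Definition yinv_ (s : seq bool) := restr s (yfun true).

(* p_n : 1^k 0 eta -> 1^(k+1) 0 eta (k < n), 1^n 0 eta -> 1^(n+1) eta,
         1^(n+1) eta -> 0 eta *)
Definition pfun (n : nat) (e : stream) : stream :=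
  if begins (nseq n.+1 true) e then prepend [:: false] (shift n.+1 e)
  else if begins (rcons (nseq n true) false) e
       then prepend (nseq n.+1 true) (shift n.+1 e)
  else prepend [:: true] e.

Definition rmul (g h : stream -> stream) : stream -> stream := fun e => h (g e).

Inductive gen_grp (G : (stream -> stream) -> Prop) : (stream -> stream) -> Prop :=
  | gg_gen g : G g -> gen_grp G g
  | gg_one : gen_grp G (fun e => e)
  | gg_mul f g : gen_grp G f -> gen_grp G g -> gen_grp G (rmul f g)
  | gg_inv f g : gen_grp G f -> (forall e, g (f e) = e) -> (forall e, f (g e) = e) ->
                 gen_grp G g.

Definition Tgens (g : stream -> stream) : Prop :=
  (exists s, g = x_ s) \/ (exists n, g = pfun n).
Definition T := gen_grp Tgens.
Definition S := gen_grp (fun g => T g \/ g = rmul (y_ [:: true; false])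
                                                 (yinv_ [:: true; true; false])).

Definition ypow (s : seq bool) (t : int) : stream -> stream :=
  match t with
  | Posz k => fun e => iter k (y_ s) e
  | Negz k => fun e => iter k.+1 (yinv_ s) e
  end.

Definition rprod (l : seq (stream -> stream)) : stream -> stream :=
  foldl rmul (fun e => e) l.

(* Main.v *)
Require Import Defs.
From mathcomp Require Import all_boot all_order all_algebra.
From mathcomp Require Import zify.
From Stdlib Require Import FunctionalExtensionality.
Set Implicit Arguments. Unset Strict Implicit. Unset Printing Implicit Defensive.

Definition sc (b : bool) (e : stream) : stream :=
  fun n => if n is m.+1 then e m else b.

Lemma prepend_nil e : prepend [::] e = e.
Proof. apply: functional_extensionality => n; by rewrite /prepend /= subn0. Qed.

Lemma prepend_cons b w e : prepend (b :: w) e = sc b (prepend w e).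
Proof.
apply: functional_extensionality => -[|n] //=.
Qed.

Lemma shift1 b e : shift 1 (sc b e) = e.
Proof. by apply: functional_extensionality. Qed.
Lemma shift2 b b' e : shift 2 (sc b (sc b' e)) = e.
Proof. by apply: functional_extensionality. Qed.
Lemma shift3 b b' b'' e : shift 3 (sc b (sc b' (sc b'' e))) = e.
Proof. by apply: functional_extensionality. Qed.
Lemma shift0 e : shift 0 e = e.
Proof. by apply: functional_extensionality. Qed.

Lemma eta1 e : e = sc (e 0) (shift 1 e).
Proof. by apply: functional_extensionality => -[|n]. Qed.
Lemma eta2 e : e = sc (e 0) (sc (e 1) (shift 2 e)).
Proof. by apply: functional_extensionality => -[|[|n]]. Qed.
Lemma eta3 e : e = sc (e 0) (sc (e 1) (sc (e 2) (shift 3 e))).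
Proof. by apply: functional_extensionality => -[|[|[|n]]]. Qed.

Lemma beginsP w e : reflect (forall i, i < size w -> e i = nth false w i) (begins w e).
Proof.
apply: (iffP allP) => H i.
  by move=> Hi; apply/eqP; apply: H; rewrite mem_iota.
by rewrite mem_iota add0n => /andP[_ Hi]; apply/eqP; apply: H.
Qed.

Lemma begins_prepend w e : begins w (prepend w e).
Proof. by apply/beginsP => i Hi; rewrite /prepend Hi. Qed.

Lemma shift_prepend w e : shift (size w) (prepend w e) = e.
Proof.
apply: functional_extensionality => n.
by rewrite /shift /prepend ltnNge leq_addr /= addKn.
Qed.

Lemma begins_eq w e : begins w e -> e = prepend w (shift (size w) e).
Proof.
move/beginsP => H; apply: functional_extensionality => n.
rewrite /prepend /shift; case: ifP => Hn; first exact: H.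
by rewrite subnKC // leqNgt Hn.
Qed.

Definition disj (a b : seq bool) :=
  exists i, [/\ i < size a, i < size b & nth false a i <> nth false b i].

Lemma disj_sym a b : disj a b -> disj b a.
Proof. by case=> i [h1 h2 h3]; exists i; split => // /esym. Qed.

Lemma begins_disj a b e : disj a b -> begins b e -> begins a e = false.
Proof.
case=> i [h1 h2 h3] /beginsP Hb; apply/negP => /beginsP Ha.
by apply: h3; rewrite -Ha // -Hb.
Qed.

Lemma restr_comm a b F G e : disj a b ->
  restr a F (restr b G e) = restr b G (restr a F e).
Proof.
move=> D; rewrite /restr.
case Hb: (begins b e); case Ha: (begins a e).
- by rewrite (begins_disj D Hb) in Ha.
- by rewrite (begins_disj D (begins_prepend _ _)) Hb.
- by rewrite (begins_disj (disj_sym D) (begins_prepend _ _)).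
- by rewrite Hb.
Qed.

Lemma restr_inv s F G e : (forall x, F (G x) = x) -> restr s F (restr s G e) = e.
Proof.
move=> H; rewrite /restr; case Hb: (begins s e); last by rewrite Hb.
by rewrite begins_prepend shift_prepend H -begins_eq.
Qed.

Lemma restr_conj a a' F g h : (forall e, g (h e) = e) -> (forall e, h (g e) = e) ->
  (forall x, g (prepend a x) = prepend a' x) ->
  forall e, g (restr a F (h e)) = restr a' F e.
Proof.
move=> gh hg Hg e; rewrite /restr.
case Hb: (begins a' e).
  have He := begins_eq Hb.
  have -> : h e = prepend a (shift (size a') e) by rewrite {1}He -Hg hg.
  by rewrite begins_prepend shift_prepend Hg.
case Ha: (begins a (h e)); last by rewrite gh.
have : e = prepend a' (shift (size a) (h e)) by rewrite -Hg -(begins_eq Ha) gh.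
by move=> He; rewrite He begins_prepend in Hb.
Qed.
Lemma ybit_fuel f g inv e n : n < f -> n < g -> ybit f inv e n = ybit g inv e n.
Proof.
elim: f g inv e n => [|f IH] [|g] inv e n //= Hf Hg.
case: inv; case: (e 0); case: (e 1) => /=;
  case: n Hf Hg => [|[|n]] Hf Hg //=; apply: IH; lia.
Qed.

Lemma ybitS f inv e n : ybit f.+1 inv e n =
    if ~~ inv then
      if e 0 then
        match n with 0 | 1 => true | m.+2 => ybit f false (shift 1 e) m end
      else if e 1 then
        match n with 0 => true | 1 => false | m.+2 => ybit f true (shift 2 e) m end
      else
        match n with 0 => false | m.+1 => ybit f false (shift 2 e) m end
    else
      if ~~ e 0 then
        match n with 0 | 1 => false | m.+2 => ybit f true (shift 1 e) m end
      else if ~~ e 1 then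
        match n with 0 => false | 1 => true | m.+2 => ybit f false (shift 2 e) m end
      else
        match n with 0 => true | m.+1 => ybit f true (shift 2 e) m end.
Proof. by []. Qed.

Lemma yfunF e : yfun false e =
  if e 0 then sc true (sc true (yfun false (shift 1 e)))
  else if e 1 then sc true (sc false (yfun true (shift 2 e)))
  else sc false (yfun false (shift 2 e)).
Proof.
apply: functional_extensionality => n; rewrite /yfun ybitS.
case: (e 0); case: (e 1); rewrite /sc /yfun; cbv beta iota; case: n => [|[|n]] //;
  cbv beta iota; apply: ybit_fuel; lia.
Qed.

Lemma yfunT e : yfun true e =
  if ~~ e 0 then sc false (sc false (yfun true (shift 1 e)))
  else if ~~ e 1 then sc false (sc true (yfun false (shift 2 e)))
  else sc true (yfun true (shift 2 e)).
Proof.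
apply: functional_extensionality => n; rewrite /yfun ybitS.
case: (e 0); case: (e 1); rewrite /sc /yfun; cbv beta iota; case: n => [|[|n]] //;
  cbv beta iota; apply: ybit_fuel; lia.
Qed.

Lemma sc0 b e : sc b e 0 = b. Proof. by []. Qed.
Lemma scS b e n : sc b e n.+1 = e n. Proof. by []. Qed.

Lemma yfun_inv_aux N : forall n, n < N -> forall e,
  yfun false (yfun true e) n = e n /\ yfun true (yfun false e) n = e n.
Proof.
elim: N => [|N IH] n // Hn e.
split.
- rewrite [yfun true e]yfunT.
  case E0: (e 0); case E1: (e 1) => /=; rewrite yfunF !sc0 ?scS ?sc0 ?shift1 ?shift2;
  case: n Hn => [|[|n]] Hn; rewrite ?sc0 ?scS //;
  (first [apply: (proj1 (IH _ _ _)) | apply: (proj2 (IH _ _ _))]; lia).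
- rewrite [yfun false e]yfunF.
  case E0: (e 0); case E1: (e 1) => /=; rewrite yfunT !sc0 ?scS ?sc0 /= ?shift1 ?shift2;
  case: n Hn => [|[|n]] Hn; rewrite ?sc0 ?scS //;
  (first [apply: (proj1 (IH _ _ _)) | apply: (proj2 (IH _ _ _))]; lia).
Qed.

Lemma yFT e : yfun false (yfun true e) = e.
Proof.
apply: functional_extensionality => n.
by case: (yfun_inv_aux (ltnSn n) e).
Qed.
Lemma yTF e : yfun true (yfun false e) = e.
Proof.
apply: functional_extensionality => n.
by case: (yfun_inv_aux (ltnSn n) e).
Qed.
Lemma S_ext f g : S f -> (forall e, f e = g e) -> S g.
Proof. by move=> Hf H; have <- : f = g by apply: functional_extensionality. Qed.

Lemma S_T g : T g -> S g.
Proof. by move=> H; apply: gg_gen; left. Qed.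

Definition xinv (e : stream) : stream :=
  if e 0 then (if e 1 then shift 1 e else sc false (sc true (shift 2 e)))
  else sc false e.

Lemma x00 e : xfun (sc false (sc false e)) = sc false e.
Proof. by rewrite /xfun /= shift1. Qed.
Lemma x01 e : xfun (sc false (sc true e)) = sc true (sc false e).
Proof. by rewrite /xfun /= !prepend_cons prepend_nil shift2. Qed.
Lemma x1 e : xfun (sc true e) = sc true (sc true e).
Proof. by rewrite /xfun /= !prepend_cons prepend_nil. Qed.
Lemma xi0 e : xinv (sc false e) = sc false (sc false e).
Proof. by []. Qed.
Lemma xi10 e : xinv (sc true (sc false e)) = sc false (sc true e).
Proof. by rewrite /xinv /= shift2. Qed.
Lemma xi11 e : xinv (sc true (sc true e)) = sc true e.
Proof. by rewrite /xinv /= shift1. Qed.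

Lemma x_xinv e : xfun (xinv e) = e.
Proof.
rewrite (eta2 e); move: (e 0) (e 1) (shift 2 e) => [] [] f.
- by rewrite xi11 x1.
- by rewrite xi10 x01.
- by rewrite xi0 x00.
- by rewrite xi0 x00.
Qed.
Lemma xinv_x e : xinv (xfun e) = e.
Proof.
rewrite (eta2 e); move: (e 0) (e 1) (shift 2 e) => [] [] f.
- by rewrite x1 xi11.
- by rewrite x1 xi11.
- by rewrite x01 xi10.
- by rewrite x00 xi0.
Qed.

Lemma S_x : S xfun.
Proof.
apply: (@S_ext (x_ [::])); first by apply: S_T; apply: gg_gen; left; exists [::].
by move=> e; rewrite /x_ /restr /= shift0 prepend_nil.
Qed.
Lemma S_xinv : S xinv.
Proof. exact: (gg_inv S_x xinv_x x_xinv). Qed.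

Definition p2 := pfun 2.
Lemma p0 e : p2 (sc false e) = sc true (sc false e).
Proof. by rewrite /p2 /pfun /= prepend_cons prepend_nil. Qed.
Lemma p10 e : p2 (sc true (sc false e)) = sc true (sc true (sc false e)).
Proof. by rewrite /p2 /pfun /= prepend_cons prepend_nil. Qed.
Lemma p110 e : p2 (sc true (sc true (sc false e))) = sc true (sc true (sc true e)).
Proof. by rewrite /p2 /pfun /= !prepend_cons prepend_nil shift3. Qed.
Lemma p111 e : p2 (sc true (sc true (sc true e))) = sc false e.
Proof. by rewrite /p2 /pfun /= !prepend_cons prepend_nil shift3. Qed.

Definition p3 e := p2 (p2 (p2 e)).
Lemma p4 e : p2 (p3 e) = e.
Proof.
rewrite /p3 (eta3 e); move: (e 0) (e 1) (e 2) (shift 3 e) => [] [] [] f.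
- by rewrite p111 p0 p10 p110.
- by rewrite p110 p111 p0 p10.
- by rewrite p10 p110 p111 p0.
- by rewrite p10 p110 p111 p0.
- by rewrite p0 p10 p110 p111.
- by rewrite p0 p10 p110 p111.
- by rewrite p0 p10 p110 p111.
- by rewrite p0 p10 p110 p111.
Qed.
Lemma p4' e : p3 (p2 e) = e.
Proof. by rewrite /p3 -[X in _ = X]p4. Qed.

Lemma S_p2 : S p2.
Proof. by apply: S_T; apply: gg_gen; right; exists 2. Qed.
Lemma S_p3 : S p3.
Proof. by apply: gg_mul S_p2 (gg_mul S_p2 S_p2). Qed.
Definition P a b := S (rmul (y_ a) (yinv_ b)).

Lemma y_yinv s e : y_ s (yinv_ s e) = e.
Proof. exact: restr_inv yFT. Qed.
Lemma yinv_y s e : yinv_ s (y_ s e) = e.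
Proof. exact: restr_inv yTF. Qed.

Lemma P_sym a b : P a b -> P b a.
Proof.
move=> H; apply: (gg_inv H) => e; rewrite /rmul.
- by rewrite y_yinv yinv_y.
- by rewrite y_yinv yinv_y.
Qed.

Lemma P_trans a b c : P a b -> P b c -> P a c.
Proof.
move=> H1 H2; apply: (S_ext (gg_mul H1 H2)) => e.
by rewrite /rmul y_yinv.
Qed.

Lemma P_conj a b a' b' g h : S g -> S h ->
  (forall e, g (h e) = e) -> (forall e, h (g e) = e) ->
  (forall x, g (prepend a x) = prepend a' x) ->
  (forall x, g (prepend b x) = prepend b' x) -> P a b -> P a' b'.
Proof.
move=> Sg Sh gh hg Ha Hb H.
apply: (S_ext (gg_mul (gg_mul Sh H) Sg)) => e; rewrite /rmul.
rewrite -[y_ a (h e)]hg.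
rewrite /yinv_ (restr_conj _ gh hg Hb).
by rewrite /y_ (restr_conj _ gh hg Ha).
Qed.

Lemma P_base : P [:: true; false] [:: true; true; false].
Proof. by apply: gg_gen; right. Qed.

Definition N j := nseq j true ++ [:: false].

Lemma xpre u x : xfun (prepend (true :: u) x) = prepend (true :: true :: u) x.
Proof. by rewrite !prepend_cons x1. Qed.

Lemma P_N j : P (N j.+1) (N j.+2).
Proof.
elim: j => [|j IH]; first exact: P_base.
apply: (P_conj S_x S_xinv x_xinv xinv_x _ _ IH) => x; exact: xpre.
Qed.

Lemma P_N2 a d : P (N a.+1) (N (a + d).+2).
Proof.
elim: d => [|d IH]; first by rewrite addn0; exact: P_N.
apply: (P_trans IH); rewrite addnS; exact: P_N.
Qed.


Lemma P_N3 a b : a <> b -> P (N a.+1) (N b.+1).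
Proof.
move=> ne; case: (ltngtP a b) => H.
- have -> : b = (a + (b - a).-1).+1 by lia.
  exact: P_N2.
- apply: P_sym; have -> : a = (b + (a - b).-1).+1 by lia.
  exact: P_N2.
- by [].
Qed.

Lemma P_B w : P (false :: w) [:: true; false].
Proof.
have base : P [:: false] [:: true; false].
  apply: (P_conj S_p3 S_p2 p4' p4 _ _ P_base) => x.
  - by rewrite -(p4' (prepend [:: false] x)) !prepend_cons p0.
  - by rewrite -(p4' (prepend [:: true; false] x)) !prepend_cons p10.
elim: w => [|b w IH]; first exact: base.
case: b.
- have H1 : P (true :: false :: w) [:: true; true; false].
    apply: (P_conj S_p2 S_p3 p4 p4' _ _ IH) => x; rewrite !prepend_cons.
    + exact: p0.
    + exact: p10.
  apply: (P_conj S_xinv S_x xinv_x x_xinv _ _ H1) => x; rewrite !prepend_cons.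
  + exact: xi10.
  + by rewrite xi11.
- have H1 : P (false :: w) [:: true; true; false] := P_trans IH P_base.
  apply: (P_conj S_xinv S_x xinv_x x_xinv _ _ H1) => x; rewrite !prepend_cons.
  + exact: xi0.
  + by rewrite xi11.
Qed.

Lemma P_K k w : P (nseq k true ++ false :: w) (N k.+1).
Proof.
elim: k => [|k IH]; first exact: P_B.
case: k IH => [|k] IH.
- apply: (P_conj S_p2 S_p3 p4 p4' _ _ IH) => x; rewrite /= !prepend_cons.
  + exact: p0.
  + exact: p10.
- apply: (P_conj S_x S_xinv x_xinv xinv_x _ _ IH) => x; exact: xpre.
Qed.

Lemma P_final k w M : P (nseq k true ++ false :: w) (N M.+1).
Proof.
apply: (P_trans (P_K k w)).
case: (eqVneq k M) => [->|ne]; last by apply: P_N3; apply/eqP.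
rewrite /P; apply: (@S_ext (fun e => e)); first exact: gg_one.
by move=> e; rewrite /rmul yinv_y.
Qed.
Lemma decomp s : (forall m, s <> nseq m true) -> exists k w, s = nseq k true ++ false :: w.
Proof.
elim: s => [|b s IH] H; first by case: (H 0).
case: b H => H; last by exists 0, s.
have [k [w ->]] : exists k w, s = nseq k true ++ false :: w.
  by apply: IH => m E; apply: (H m.+1); rewrite E.
by exists k.+1, w.
Qed.

Lemma disjN k w M : (size (nseq k true ++ false :: w) <= M)%N ->
  disj (nseq k true ++ false :: w) (N M).
Proof.
rewrite size_cat size_nseq /= => H; exists k; split.
- rewrite size_cat size_nseq /=; lia.
- rewrite /N size_cat size_nseq /=; lia.
- rewrite /N !nth_cat size_nseq ltnn subnn /= size_nseq nth_nseq.
  by have -> : (k < M)%N by lia.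
Qed.

Local Open Scope ring_scope.
Import GRing.Theory.

Lemma int_ind' (Q : int -> Prop) : Q 0 -> (forall k, Q k -> Q (k + 1)) ->
  (forall k, Q k -> Q (k - 1)) -> forall z, Q z.
Proof.
move=> H0 Hs Hp [k|k].
- elim: k => [|k IH] //.
  have -> : Posz k.+1 = Posz k + 1 by rewrite -addn1 PoszD.
  exact: Hs.
- elim: k => [|k IH]; first by apply: (Hp 0).
  have -> : Negz k.+1 = Negz k - 1 by rewrite !NegzE; lia.
  exact: Hp.
Qed.

Lemma ypow_succ s k e : ypow s (k + 1) e = y_ s (ypow s k e).
Proof.
case: k => [k|[|k]].
- have -> : Posz k + 1 = Posz k.+1 by rewrite -addn1 PoszD.
  by [].
- by rewrite /= y_yinv.
- have -> : Negz k.+1 + 1 = Negz k by rewrite !NegzE; lia.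
  by rewrite /= y_yinv.
Qed.

Lemma ypow_pred s k e : ypow s (k - 1) e = yinv_ s (ypow s k e).
Proof.
case: k => [[|k]|k].
- by [].
- have -> : Posz k.+1 - 1 = Posz k by lia.
  by rewrite /= yinv_y.
- have -> : Negz k - 1 = Negz k.+1 by rewrite !NegzE; lia.
  by [].
Qed.

Lemma iter_comm (f G : stream -> stream) k e : (forall e, G (f e) = f (G e)) ->
  iter k f (G e) = G (iter k f e).
Proof. by move=> H; elim: k => [|k IH] //; rewrite !iterS IH H. Qed.

Lemma ypow_comm r G u e : (forall e, G (y_ r e) = y_ r (G e)) ->
  (forall e, G (yinv_ r e) = yinv_ r (G e)) -> ypow r u (G e) = G (ypow r u e).
Proof.
move=> H1 H2; case: u => k; rewrite /ypow; apply: iter_comm => //.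
Qed.

Lemma ypow_add r a b e : ypow r a (ypow r b e) = ypow r (a + b) e.
Proof.
elim/int_ind': a.
- by rewrite add0r.
- by move=> k IH; rewrite ypow_succ IH -ypow_succ addrAC.
- by move=> k IH; rewrite ypow_pred IH -ypow_pred addrAC.
Qed.

Lemma ypow_comm2 s r t u e : disj s r -> ypow r u (ypow s t e) = ypow s t (ypow r u e).
Proof.
move=> D; apply: ypow_comm => x; apply: ypow_comm => z;
  first [exact: (restr_comm _ _ _ D) | exact: (restr_comm _ _ _ (disj_sym D))].
Qed.

Lemma Z_in s r : disj s r -> P s r -> forall t, S (fun e => ypow r (- t) (ypow s t e)).
Proof.
move=> D Hp; elim/int_ind'.
- by apply: (@S_ext (fun e => e)); first exact: gg_one.
- move=> k IH; apply: (S_ext (gg_mul IH Hp)) => e; rewrite /rmul.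
  rewrite opprD ypow_pred ypow_succ; congr (yinv_ r _).
  by symmetry; apply: ypow_comm => x; first [exact: (restr_comm _ _ _ D) | exact: (restr_comm _ _ _ (disj_sym D))].
- move=> k IH.
  have Hi : S (fun e => y_ r (yinv_ s e)).
    apply: (gg_inv Hp) => e; rewrite /rmul.
    + have -> : yinv_ s (yinv_ r (y_ s e)) = yinv_ r (yinv_ s (y_ s e)) by exact: restr_comm D.
      by rewrite yinv_y y_yinv.
    + have -> : y_ s (y_ r (yinv_ s e)) = y_ r (y_ s (yinv_ s e)) by exact: restr_comm D.
      by rewrite y_yinv yinv_y.
  apply: (S_ext (gg_mul IH Hi)) => e; rewrite /rmul.
  rewrite opprB addrC ypow_pred ypow_succ; congr (y_ r _).
  by symmetry; apply: ypow_comm => x; first [exact: (restr_comm _ _ _ D) | exact: (restr_comm _ _ _ (disj_sym D))].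
Qed.
Unset Implicit Arguments.
Lemma main_aux n (s : 'I_n -> seq bool) (t : 'I_n -> int) r
  (Hd : forall i, disj (s i) r) (Hp : forall i, P (s i) r) (L : seq 'I_n) f c :
  S (fun e => ypow r (- c) (f e)) ->
  S (fun e => ypow r (- (c + \sum_(i <- L) t i))
     (foldl rmul f [seq ypow (s i) (t i) | i <- L] e)).
Proof.
elim: L f c => [|i L IH] f c H.
- by rewrite big_nil addr0.
- rewrite big_cons addrA /=; apply: IH.
  apply: (S_ext (gg_mul H (Z_in (Hd i) (Hp i) (t i)))) => e; rewrite /rmul.
  rewrite -(ypow_comm2 _ _ _ (Hd i)) ypow_add.
  by congr ypow; rewrite opprD addrC.
Qed.

Theorem lemma6p8 (n : nat) (s : 'I_n -> seq bool) (t : 'I_n -> int)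
  (hs : forall i : 'I_n, forall m : nat, s i <> nseq m true)
  (ht : \sum_(i < n) t i = 0) :
  S (rprod [seq ypow (s i) (t i) | i <- enum 'I_n]).
Proof.
pose R := (\sum_(i < n) size (s i))%N.
have Hd : forall i, disj (s i) (N R.+1).
  move=> i; have [k [w E]] := decomp (hs i); rewrite E; apply: disjN.
  rewrite -E; apply: leqW; rewrite /R (bigD1 i) //=; exact: leq_addr.
have Hp : forall i, P (s i) (N R.+1).
  move=> i; have [k [w ->]] := decomp (hs i); exact: P_final.
have H0 : S (fun e => ypow (N R.+1) (- 0) e).
  by rewrite oppr0; apply: (@S_ext (fun e => e)); first exact: gg_one.
have := @main_aux n s t _ Hd Hp (enum 'I_n) (fun e => e) 0 H0.
rewrite big_enum /= ht add0r oppr0 => H.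
by apply: (S_ext H).
Qed.
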